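(* Let $\varphi$ be an instance of 2-Clause 3-SAT and let $G(\varphi)$ be the graph constructed from $\varphi$ as described in the context. If $\mathrm{wcol}_2(G(\varphi)) \leq 5$, then $\varphi$ has a satisfying assignment.
   Context: 2-Clause 3-SAT: given a CNF formula $\varphi$ with clauses $c_1,\dots,c_m$ over variables $x_1,\dots,x_n$ in which each clause contains at most 3 literals and each literal ($x_j$ or $\overline{x}_j$) appears in exactly 2 clauses, decide whether $\varphi$ is satisfiable. It is assumed throughout that no variable appears twice in a single clause and that there are no clauses with a single literal (so each clause has 2 or 3 literals). Construction of $G(\varphi)$: for each clause $c_i$ create 6 vertices $u_i^1,\dots,u_i^6$. If $c_i$ contains only 2 literals, add 2 more vertices $f_i, f'_i$, each adjacent to all of $u_i^1,\dots,u_i^6$. For each variable $x_j$ create two vertices $v_j$ and $v'_j$ (for the literals $x_j$ and $\overline{x}_j$) joined by an edge. For each clause $c_i$ containing the literal $x_j$, add an edge from $v_j$ to each of $u_i^1,\dots,u_i^6$; for each clause $c_i$ containing $\overline{x}_j$, add an edge from $v'_j$ to each of $u_i^1,\dots,u_i^6$. Weak coloring numbers: for a graph $G=(V,E)$ and a total order $\sigma$ of $V$, a vertex $v\neq u$ is weakly $r$-reachable from $u$ if $u <_\sigma v$ and there is a $u$–$v$ path $P$ of length at most $r$ such that every vertex $p$ of $P$ other than $u,v$ satisfies $p <_\sigma v$. Let $\mathrm{wreach}_r(u,G_\sigma)$ be the set of such $v$. Then $\mathrm{wcol}_r(G)=\min_\sigma \max_{u\in V}|\mathrm{wreach}_r(u,G_\sigma)|$,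 the minimum over all total orders of $V$. *)

(* Defs.v *)
From mathcomp Require Import all_boot all_fingroup.
Set Implicit Arguments. Unset Strict Implicit. Unset Printing Implicit Defensive.

(* Variables x_0..x_{n-1} are 'I_n; a literal is (j, b) : 'I_n * bool, where
   (j, true) is x_j and (j, false) is its negation. *)
Definition lit (n : nat) := ('I_n * bool)%type.

Definition two_clause_3sat (n m : nat) (cl : 'I_m -> {set lit n}) : Prop :=
  [/\
      (forall i, 2 <= #|cl i| <= 3),
      (forall i (j : 'I_n), ~~ (((j, true) \in cl i) && ((j, false) \in cl i)))
    &
      (forall l : lit n, #|[set i | l \in cl i]| = 2)].

Definition satisfiable (n m : nat) (cl : 'I_m -> {set lit n}) : Prop :=
  exists a : 'I_n -> bool, forall i, exists2 l, l \in cl i & a l.1 = l.2.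

(* raw vertices:
   inl (inl (i, k))  = u_i^{k+1}   (k : 'I_6)
   inl (inr (i, b))  = f_i (b = false) / f'_i (b = true)  (only if |c_i| = 2)
   inr (j, b)        = v_j (b = true) / v'_j (b = false) *)
Definition rawV (n m : nat) :=
  (('I_m * 'I_6) + ('I_m * bool) + ('I_n * bool))%type.

Definition vok (n m : nat) (cl : 'I_m -> {set lit n}) (x : rawV n m) : bool :=
  match x with
  | inl (inr (i, _)) => #|cl i| == 2
  | _ => true
  end.

Definition rawadj (n m : nat) (cl : 'I_m -> {set lit n}) (x y : rawV n m) : bool :=
  match x, y with
  | inl (inl (i, _)), inl (inr (i', _)) => i == i'
  | inl (inr (i, _)), inl (inl (i', _)) => i == i'
  | inl (inl (i, _)), inr l => l \in cl i
  | inr l, inl (inl (i, _)) => l \in cl i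
  | inr (j, b), inr (j', b') => (j == j') && (b != b')
  | _, _ => false
  end.

Definition GV (n m : nat) (cl : 'I_m -> {set lit n}) : finType :=
  {x : rawV n m | vok cl x}.

Definition Gadj (n m : nat) (cl : 'I_m -> {set lit n}) : rel (GV cl) :=
  fun x y => rawadj cl (val x) (val y).

(* A total order sigma of V is given by a permutation s of V:
   u <_s v  iff  the position of s u in enum V is smaller than that of s v.
   Every total order of V arises this way. *)
Definition ltord (V : finType) (s : {perm V}) (u v : V) : bool :=
  (enum_rank (s u) < enum_rank (s v))%N.

(* v is weakly r-reachable from u: u <_s v and there is a u-v path
   u = p_0, p_1, ..., p_l = v (l <= r, vertices pairwise distinct) whose inner
   vertices are all <_s v. *)
Definition wreach_path (V : finType) (e : rel V) (s : {perm V}) (u v : V)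
    (p : seq V) : bool :=
  [&& path e u p, last u p == v, uniq (u :: p)
    & all (fun x => ltord s x v) (behead (belast u p))].

Definition wreach (V : finType) (e : rel V) (r : nat) (s : {perm V}) (u : V)
    : {set V} :=
  [set v | [&& v != u, ltord s u v &
     [exists l : 'I_r.+1, exists p : l.-tuple V, wreach_path e s u v p]]].

(* wcol_r(G) = min over orders of max over u of |wreach_r(u)|.
   (#|V| is a harmless neutral element: every value is < #|V| and the
   range of permutations is nonempty.) *)
Definition wcol (V : finType) (e : rel V) (r : nat) : nat :=
  \big[minn/#|V|]_(s : {perm V}) \max_(u : V) #|wreach e r s u|.

(* Main.v *)
Require Import Defs.
From mathcomp Require Import all_boot all_fingroup zify.
Set Implicit Arguments. Unset Strict Implicit. Unset Printing Implicit Defensive.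

Lemma rawadj_sym n m (cl : 'I_m -> {set lit n}) x y : rawadj cl x y = rawadj cl y x.
Proof.
case: x => [[[i k]|[i b]]|[j b]]; case: y => [[[i' k']|[i' b']]|[j' b']] //=;
  rewrite ?(eq_sym i) //.
by rewrite (eq_sym j) (eq_sym b).
Qed.

Lemma ltord_total (V : finType) (s : {perm V}) u v : u != v -> ltord s u v || ltord s v u.
Proof.
move=> neq; rewrite /ltord -neq_ltn; apply: contra neq => /eqP H.
by apply/eqP; apply: (perm_inj (s:=s)); apply: enum_rank_inj; apply: val_inj.
Qed.

Lemma ltord_trans (V : finType) (s : {perm V}) u v w : ltord s u v -> ltord s v w -> ltord s u w.
Proof. rewrite /ltord; exact: ltn_trans. Qed.

Lemma ltord_irr (V : finType) (s : {perm V}) u : ltord s u u = false.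
Proof. by rewrite /ltord ltnn. Qed.

Lemma wreach1 (V : finType) (e : rel V) (s : {perm V}) u v :
  e u v -> u != v -> ltord s u v -> v \in wreach e 2 s u.
Proof.
move=> euv nuv luv; rewrite inE eq_sym nuv luv /=.
apply/existsP; exists (@Ordinal 3 1 erefl); apply/existsP; exists [tuple v].
by rewrite /wreach_path /= euv eqxx inE nuv.
Qed.

Lemma wreach2 (V : finType) (e : rel V) (s : {perm V}) u x v :
  e u x -> e x v -> uniq [:: u; x; v] -> ltord s u v -> ltord s x v -> v \in wreach e 2 s u.
Proof.
move=> eux exv un luv lxv.
have nuv : v != u.
  by apply: contraTneq luv => ->; rewrite ltord_irr.
rewrite inE nuv luv /=.
apply/existsP; exists (@Ordinal 3 2 erefl); apply/existsP; exists [tuple x; v].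
by apply/and4P; split => //=; rewrite ?eux ?exv ?lxv.
Qed.

Definition litv n m (cl : 'I_m -> {set lit n}) (l : lit n) : GV cl :=
  exist (fun x => vok cl x) (inr l) isT.
Definition uv n m (cl : 'I_m -> {set lit n}) (i : 'I_m) (k : 'I_6) : GV cl :=
  exist (fun x => vok cl x) (inl (inl (i, k))) isT.
Definition asg n m (cl : 'I_m -> {set lit n}) (s : {perm GV cl}) (j : 'I_n) : bool :=
  ltord s (litv cl (j, false)) (litv cl (j, true)).

Lemma Gadj_uv n m (cl : 'I_m -> {set lit n}) i k (x : GV cl) :
  Gadj (uv cl i k) x = Gadj (uv cl i ord0) x.
Proof. by case: x => [[[[? ?]|[? ?]]|[? ?]] ?]. Qed.

Lemma Gadj_sym n m (cl : 'I_m -> {set lit n}) (x y : GV cl) : Gadj x y = Gadj y x.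
Proof. exact: rawadj_sym. Qed.

Lemma Gadj_irr n m (cl : 'I_m -> {set lit n}) (x : GV cl) : Gadj x x = false.
Proof. by case: x => [[[[? ?]|[? ?]]|[? ?]] ?] /=; rewrite /Gadj /= ?eqxx ?andbF. Qed.

Lemma clause_ok n m (cl : 'I_m -> {set lit n}) (s : {perm GV cl}) :
  two_clause_3sat cl ->
  (forall u, #|wreach (@Gadj n m cl) 2 s u| <= 5) ->
  forall i, exists2 l, l \in cl i & asg s l.1 = l.2.
Proof.
move=> [Hsz Hnd _] Hw i.
case: (boolP [exists l in cl i, asg s l.1 == l.2]) => [/exists_inP [l Hl /eqP]|Hno];
  first by exists l.
exfalso.
have Hlt : forall l, l \in cl i -> ltord s (litv cl l) (litv cl (l.1, ~~ l.2)).
  move=> [j b] Hl; move/exists_inPn: Hno => /(_ _ Hl) /=.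
  have Hne : litv cl (j, true) != litv cl (j, false).
    by apply/eqP => /(congr1 val) /= [] .
  have := ltord_total s Hne; rewrite /asg.
  by case: b Hl => Hl /=; case: (ltord s (litv cl (j, false)) _); rewrite ?orbF.
case: (arg_minnP (fun k : 'I_6 => (enum_rank (s (uv cl i k)) : nat)) (isT : predT (@ord0 5)))
  => ka _ Hmin.
set a := uv cl i ka.
set N := [set x | Gadj (uv cl i ord0) x].
have aN : forall x, x \in N -> x != a.
  move=> x; rewrite inE; apply: contraTneq => ->; by rewrite /a -(Gadj_uv i ka) Gadj_irr.
case: (boolP [exists x in N, ltord s x a]) => [/exists_inP [x xN xa]|Hno2].
  have Hsub : [set uv cl i k | k in 'I_6] \subset wreach (@Gadj n m cl) 2 s x.
    apply/subsetP => y /imsetP [k _ ->].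
    apply: wreach1.
    - by rewrite Gadj_sym Gadj_uv; move: xN; rewrite inE.
    - apply: contraTneq xN => ->; by rewrite inE -(Gadj_uv i k) Gadj_irr.
    - move: xa; rewrite /ltord => xa; apply: (leq_trans xa); exact: Hmin.
  have := subset_leq_card Hsub; rewrite card_imset ?card_ord.
    by move=> H; have := leq_trans H (Hw x).
  by move=> k k' /(congr1 val) [].
have HaN : forall x, x \in N -> ltord s a x.
  move=> x xN; have := ltord_total s (aN x xN).
  by move/exists_inPn: Hno2 => /(_ _ xN) /negPf ->.
set L := [set x : GV cl | if val x is inr l then l \in cl i else false].
set C := [set x : GV cl | if val x is inr l then (l.1, ~~ l.2) \in cl i else false].
set F := [set x : GV cl | if val x is inl (inr (i', _)) then i' == i else false].
have LN : L \subset N.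
  by apply/subsetP => -[[[[? ?]|[? ?]]|l] ?]; rewrite !inE.
have FN : F \subset N.
  by apply/subsetP => -[[[[? ?]|[? ?]]|l] ?]; rewrite !inE //= eq_sym.
have Hsub : L :|: F :|: C \subset wreach (@Gadj n m cl) 2 s a.
  apply/subsetP => x /setUP [/setUP [xL|xF]|xC].
  - have xN : x \in N by apply: (subsetP LN).
    apply: wreach1; first by rewrite /a Gadj_uv; move: xN; rewrite inE.
      by rewrite eq_sym aN.
    exact: HaN.
  - have xN : x \in N by apply: (subsetP FN).
    apply: wreach1; first by rewrite /a Gadj_uv; move: xN; rewrite inE.
      by rewrite eq_sym aN.
    exact: HaN.
  - move: x xC => [[[[? ?]|[? ?]]|[j b]] px]; rewrite inE //= => xC.
    have Hl := Hlt _ xC; rewrite /= negbK in Hl.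
    have -> : exist (fun x => vok cl x) (inr (j, b)) px = litv cl (j, b) by apply: val_inj.
    have mN : litv cl (j, ~~ b) \in N by rewrite inE.
    apply: (wreach2 (x := litv cl (j, ~~ b))).
    - by rewrite /a Gadj_uv; move: mN; rewrite inE.
    - by rewrite /Gadj /= eqxx /=; case: (b) {xC Hl mN}.
      rewrite !cons_uniq !inE andbT !negb_or.
      rewrite -andbA; apply/and3P; split; try by apply/eqP => /(congr1 val).
      by apply/eqP => /(congr1 val) /= [] /eqP; case: (b) {xC Hl mN}.
    - exact: ltord_trans (HaN _ mN) Hl.
    - exact: Hl.
have HLF : L :&: F = set0.
  by apply/setP => -[[[[? ?]|[? ?]]|l] ?]; rewrite !inE /= ?andbF.
have HLFC : (L :|: F) :&: C = set0.
  apply/setP => -[[[[? ?]|[? ?]]|[j b]] ?]; rewrite !inE /= ?andbF ?orbF //.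
  by case: (b); have := Hnd i j; [|rewrite andbC]; move/negPf => ->.
have Hcard : #|L :|: F :|: C| = #|L| + #|F| + #|C|.
  by rewrite cardsU HLFC cards0 subn0 cardsU HLF cards0 subn0.
have HL : #|cl i| <= #|L|.
  rewrite -(card_imset (mem (cl i)) (f := litv cl)); last by move=> ? ? /(congr1 val) [].
  apply: subset_leq_card; apply/subsetP => y /imsetP [l Hl ->]; by rewrite inE.
have HC : #|cl i| <= #|C|.
  rewrite -(card_imset (mem (cl i)) (f := fun l => litv cl (l.1, ~~ l.2))); last first.
    by move=> [? ?] [? ?] /(congr1 val) [] -> /negbLR; rewrite negbK => ->.
  apply: subset_leq_card; apply/subsetP => y /imsetP [[j b] Hl ->]; by rewrite inE /= negbK.
have HF : #|cl i| = 2 -> 2 <= #|F|.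
  move=> H2; have pf : vok cl (inl (inr (i, false))) by rewrite /= H2.
  have pt : vok cl (inl (inr (i, true))) by rewrite /= H2.
  have <- : #|[set exist (fun x => vok cl x) _ pf; exist (fun x => vok cl x) _ pt]| = 2.
    by rewrite cards2; case: eqP => // /(congr1 val) [].
  by apply: subset_leq_card; apply/subsetP => y; rewrite !inE => /orP [] /eqP ->; rewrite /= eqxx.
have := leq_trans (subset_leq_card Hsub) (Hw a); rewrite Hcard.
have := Hsz i; case: (eqVneq #|cl i| 2) => [H2|H2].
  by have := HF H2; rewrite H2 in HL HC; move=> hF _; move: HL HC hF; clear; lia.
move=> /andP [h1 h2]; have h3 : #|cl i| = 3 by move: H2 h1 h2; clear; lia.
by rewrite h3 in HL HC; move: HL HC; clear; lia.
Qed.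

Theorem lemma3p3 (n m : nat) (cl : 'I_m -> {set lit n}) :
  two_clause_3sat cl ->
  (wcol (@Gadj n m cl) 2 <= 5)%N ->
  satisfiable cl.
Proof.
move=> H Hw.
case: m cl H Hw => [|m] cl H Hw.
  by exists (fun _ => true) => -[].
have HV : 6 <= #|GV cl|.
  rewrite -[6](card_ord 6) -(card_imset (mem 'I_6) (f := uv cl ord0)).
    exact: max_card.
  by move=> k k' /(congr1 val) [].
case: (boolP [exists s : {perm GV cl}, \max_(u : GV cl) #|wreach (@Gadj _ _ cl) 2 s u| <= 5])
  => [/existsP [s Hs]|Hno].
  exists (asg s); apply: clause_ok H _ => u.
  exact: leq_trans (leq_bigmax u) Hs.
exfalso; move: Hw; apply/negP; rewrite -ltnNge /wcol.
elim/big_ind: _ => //.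
  by move=> x y hx hy; rewrite leq_min hx hy.
move=> s _; move/existsPn: Hno => /(_ s); by rewrite ltnNge.
Qed.
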